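(* Let $n\ge 3$, let $F$ be a set of edges of $Q_n$, and let $T$ be a proper subset of the vertex set of $Q_n$ with $|T|\ge 3$ and $|T|_0\ge|T|_1$, such that every edge of $Q_n$ joining a vertex of parity 0 in $T$ to a vertex outside $T$ belongs to $F$. If the subgraph of $Q_n$ induced by $T$ is not connected, then $F$ is not minimal.
   Context: $Q_n$ is the $n$-dimensional hypercube on the binary strings of length $n$, two strings adjacent iff they differ in exactly one bit. The parity of a vertex is the number of ones in its label modulo 2. For a set $T$ of vertices, $|T|_0$ and $|T|_1$ denote the numbers of vertices of parity 0 and parity 1 in $T$. $F$ is a set of ''faulty'' edges; $Q_n-F$ is the graph with all vertices of $Q_n$ and the edges of $Q_n$ not in $F$. ''$F$ is not minimal'' means that there is a proper subset $F'\subsetneq F$ such that $Q_n-F'$ has no Hamiltonian cycle. *)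

(* Defs.v *)
From mathcomp Require Import all_boot.
Set Implicit Arguments. Unset Strict Implicit. Unset Printing Implicit Defensive.

Definition vtx (n : nat) := (n.-tuple bool : finType).

Definition qadj (n : nat) (u v : vtx n) : bool :=
  #|[set i : 'I_n | tnth u i != tnth v i]| == 1.

Definition parity (n : nat) (v : vtx n) : bool := odd (count id v).

Definition par0card (n : nat) (T : {set vtx n}) : nat := #|[set v in T | ~~ parity v]|.
Definition par1card (n : nat) (T : {set vtx n}) : nat := #|[set v in T | parity v]|.

(* Edges are represented as 2-element vertex sets {u, v}. *)
Definition is_edge_set (n : nat) (F : {set {set vtx n}}) : Prop :=
  forall e, e \in F -> exists u v : vtx n, qadj u v /\ e = [set u; v].

Definition adj_minus (n : nat) (F : {set {set vtx n}}) : rel (vtx n) :=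
  fun u v => qadj u v && ([set u; v] \notin F).

Definition hamiltonian (V : finType) (e : rel V) : Prop :=
  exists s : seq V, [/\ uniq s, size s = #|V| & cycle e s].

Definition not_minimal (n : nat) (F : {set {set vtx n}}) : Prop :=
  exists F' : {set {set vtx n}}, F' \proper F /\ ~ hamiltonian (adj_minus F').

Definition induced_adj (n : nat) (T : {set vtx n}) : rel (vtx n) :=
  fun u v => [&& u \in T, v \in T & qadj u v].

Definition induced_connected (n : nat) (T : {set vtx n}) : Prop :=
  forall x y, x \in T -> y \in T -> connect (induced_adj T) x y.

(* Main.v *)
Require Import Defs.
From mathcomp Require Import all_boot.
Set Implicit Arguments. Unset Strict Implicit. Unset Printing Implicit Defensive.

Section S.
Variable n : nat.
Implicit Types u v w : vtx n.

Definition flip (i : 'I_n) u : vtx n := [tuple tnth u j (+) (j == i) | j < n].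

Lemma tnth_flip i u j : tnth (flip i u) j = tnth u j (+) (j == i).
Proof. by rewrite tnth_mktuple. Qed.

Lemma flipK i : involutive (flip i).
Proof. by move=> u; apply: eq_from_tnth => j; rewrite !tnth_flip -addbA addbb addbF. Qed.

Lemma flipC i j u : flip i (flip j u) = flip j (flip i u).
Proof. by apply: eq_from_tnth => k; rewrite !tnth_flip -!addbA [(k == j) (+) _]addbC. Qed.

Lemma count_tnth u : count id u = \sum_(j < n) nat_of_bool (tnth u j).
Proof. by rewrite -sum1_count big_tuple big_mkcond; apply: eq_bigr => j _; case: (tnth u j). Qed.

Lemma parity_flip i u : parity (flip i u) = ~~ parity u.
Proof.
rewrite /parity !count_tnth (bigD1 i) //= [in RHS](bigD1 i) //= !oddD !oddb tnth_flip eqxx addbT.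
rewrite addNb; congr (~~ (_ (+) _)).
by congr odd; apply: eq_bigr => j ji; rewrite tnth_flip (negbTE ji) addbF.
Qed.

Lemma qadj_flip i u : qadj u (flip i u).
Proof.
rewrite /qadj; apply/cards1P; exists i; apply/setP => j; rewrite !inE tnth_flip.
by case: (j == i); case: (tnth u j).
Qed.

Lemma qadjP u v : qadj u v -> exists i, v = flip i u.
Proof.
move=> /cards1P [i Hi]; exists i; apply: eq_from_tnth => j.
have := congr1 (fun A : {set 'I_n} => j \in A) Hi; rewrite /= !inE tnth_flip.
by case: (j == i); case: (tnth u j); case: (tnth v j) => /= /eqP.
Qed.

Lemma qadj_sym u v : qadj u v = qadj v u.
Proof. by rewrite /qadj; congr (_ == _); apply: eq_card => j; rewrite !inE eq_sym. Qed.

Lemma qadj_irr u : qadj u u = false.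
Proof. by rewrite /qadj; apply/negbTE; rewrite (_ : [set _ | _] = set0) ?cards0 //; apply/setP=> j; rewrite !inE eqxx. Qed.

Lemma qadj_par u v : qadj u v -> parity v = ~~ parity u.
Proof. by move=> /qadjP [i ->]; rewrite parity_flip. Qed.

Lemma flip_closed_full (S : {set vtx n}) x :
  x \in S -> (forall w i, w \in S -> flip i w \in S) -> forall v, v \in S.
Proof.
move=> xS cl v.
move: {2}#|[set j | tnth v j != tnth x j]| (leqnn #|[set j | tnth v j != tnth x j]|) => k.
elim: k v => [|k IH] v Hk.
  have -> : v = x; last by [].
  apply: eq_from_tnth => j; apply/eqP/negPn/negP => Hj.
  suff : 0 < #|[set j | tnth v j != tnth x j]| by rewrite leqn0 in Hk; rewrite (eqP Hk).
  by apply/card_gt0P; exists j; rewrite inE.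
case: (set_0Vmem [set j | tnth v j != tnth x j]) => [E|[i Hi]].
  by apply: IH; rewrite E cards0.
rewrite -(flipK i v); apply: cl; apply: IH.
rewrite -ltnS; apply: leq_trans Hk; apply: proper_card; apply/properP; split.
  apply/subsetP => j; rewrite !inE tnth_flip; case: (j =P i) => [->|_]; last by rewrite addbF.
  by rewrite inE in Hi; move: Hi; case: (tnth v i); case: (tnth x i).
by exists i; rewrite // !inE tnth_flip eqxx; rewrite inE in Hi; move: Hi; case: (tnth v i); case: (tnth x i).
Qed.

Lemma flip_count (n0 : 0 < n) (S : {set vtx n}) : S != set0 -> S \proper setT ->
  (forall u v, u \in S -> ~~ parity u -> qadj u v -> v \in S) ->
  par0card S < par1card S.
Proof.
move=> /set0Pn [x xS] Sp cl.
set f := flip (Ordinal n0).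
have finj : injective f by apply: can_inj (flipK _).
have sub : f @: [set v in S | ~~ parity v] \subset [set v in S | parity v].
  apply/subsetP => y /imsetP [u]; rewrite !inE => /andP [uS pu] ->.
  by rewrite (cl u) ?qadj_flip // parity_flip; move: pu; case: (parity u).
have le := subset_leq_card sub; rewrite card_imset // in le.
rewrite /par0card /par1card ltn_neqAle le andbT; apply/negP => /eqP E.
have E2 : f @: [set v in S | ~~ parity v] = [set v in S | parity v].
  apply/eqP; rewrite eqEcard sub card_imset // E leqnn //.
have full := flip_closed_full xS.
have : forall v, v \in S.
  apply: full => w i wS; case pw: (parity w); last by apply: (cl w) => //; rewrite ?pw ?qadj_flip.
  have : w \in [set v in S | parity v] by rewrite inE wS pw.
  rewrite -E2 => /imsetP [u]; rewrite inE => /andP [uS pu] ->.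
  have : flip i u \in [set v in S | parity v] by rewrite inE (cl u) ?qadj_flip // parity_flip.
  rewrite -E2 => /imsetP [u']; rewrite inE => /andP [u'S _] e.
  by rewrite /f flipC e flipK.
move=> allS; move: Sp; rewrite properT => /negP; apply; apply/eqP/setP => v.
by rewrite allS inE.
Qed.
End S.

Section Cyc.
Variables (n : nat) (G : {set {set vtx n}}) (s : seq (vtx n)).
Hypotheses (Us : uniq s) (Ss : size s = #|vtx n|) (Cs : cycle (adj_minus G) s).

Lemma mem_s x : x \in s.
Proof.
have H : #|s| = #|predT : pred (vtx n)| by rewrite (card_uniqP Us) Ss.
by have /subset_cardP := H; move=> /(_ (subset_predT _)) /(_ x) ->.
Qed.

Lemma adj_next x : adj_minus G x (next s x).
Proof. exact: next_cycle Cs (mem_s x). Qed.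

Lemma adj_prev x : adj_minus G (prev s x) x.
Proof. exact: prev_cycle Cs (mem_s x). Qed.

Lemma next_full (S : {set vtx n}) x : x \in S -> (forall y, y \in S -> next s y \in S) ->
  forall y, y \in S.
Proof.
move=> xS cl y.
have : fconnect (next s) x y by rewrite (fconnect_cycle (cycle_next Us) (mem_s x)) mem_s.
move/connectP => [p Hp ->]; elim: p x xS Hp => //= z p IH x xS /andP [/eqP <- Hp].
by apply: IH Hp; apply: cl.
Qed.
End Cyc.

Lemma set2C (T : finType) (a b : T) : [set a; b] = [set b; a].
Proof. by apply/setP => z; rewrite !inE orbC. Qed.

Lemma img_sub n (X : {set vtx n}) (f : vtx n -> vtx n) :
  (forall w, qadj w (f w)) -> (forall w, w \in X -> ~~ parity w -> f w \in X) ->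
  f @: [set v in X | ~~ parity v] \subset [set v in X | parity v].
Proof.
move=> adj st; apply/subsetP => y /imsetP [u]; rewrite !inE => /andP [uX pu] ->.
by rewrite st // (qadj_par (adj u)) pu.
Qed.

Lemma img_le n (X : {set vtx n}) (f : vtx n -> vtx n) : injective f ->
  (forall w, qadj w (f w)) -> (forall w, w \in X -> ~~ parity w -> f w \in X) ->
  par0card X <= par1card X.
Proof.
move=> inj adj st; have := subset_leq_card (img_sub adj st).
by rewrite card_imset.
Qed.

Lemma img_eq n (X : {set vtx n}) (f : vtx n -> vtx n) : injective f ->
  (forall w, qadj w (f w)) -> (forall w, w \in X -> ~~ parity w -> f w \in X) ->
  par0card X = par1card X ->
  f @: [set v in X | ~~ parity v] = [set v in X | parity v].
Proof.
move=> inj adj st E; apply/eqP; rewrite eqEcard img_sub //= card_imset //.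
by rewrite -/(par0card X) -/(par1card X) E.
Qed.

Definition hypF n (G : {set {set vtx n}}) (X : {set vtx n}) :=
  forall u v : vtx n, u \in X -> ~~ parity u -> v \notin X -> qadj u v -> [set u; v] \in G.

Lemma ML n (G : {set {set vtx n}}) (X : {set vtx n}) :
  hamiltonian (adj_minus G) -> X != set0 -> X \proper setT -> hypF G X ->
  par0card X < par1card X.
Proof.
move=> [s [Us Ss Cs]] /set0Pn [x xX] Xp hyp.
have injn : injective (next s) by apply: can_inj (prev_next Us).
have injp : injective (prev s) by apply: can_inj (next_prev Us).
have adjn w : qadj w (next s w) by case/andP: (adj_next Us Ss Cs w).
have adjp w : qadj w (prev s w) by rewrite qadj_sym; case/andP: (adj_prev Us Ss Cs w).
have stn w : w \in X -> ~~ parity w -> next s w \in X.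
  move=> wX pw; apply/negPn/negP => out.
  by case/andP: (adj_next Us Ss Cs w) => _ /negP; apply; apply: hyp.
have stp w : w \in X -> ~~ parity w -> prev s w \in X.
  move=> wX pw; apply/negPn/negP => out.
  by case/andP: (adj_prev Us Ss Cs w) => _ /negP; apply; rewrite set2C; apply: hyp.
rewrite ltn_neqAle (img_le injn adjn stn) andbT; apply/negP => /eqP E.
have Ep := img_eq injp adjp stp E.
have all := next_full Us Ss xX.
move: Xp; rewrite properT => /negP; apply; apply/eqP/setP => v; rewrite inE.
apply: all => y yX; case py: (parity y); last by apply: stn; rewrite ?py.
have : y \in [set v in X | parity v] by rewrite inE yX py.
rewrite -Ep => /imsetP [u]; rewrite inE => /andP [uX _] ->.
by rewrite next_prev.
Qed.

Lemma set2_inj n (w x y : vtx n) : qadj w x -> [set w; x] = [set w; y] -> x = y.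
Proof.
move=> wx E; have : x \in [set w; y] by rewrite -E !inE eqxx orbT.
rewrite !inE => /orP [/eqP xw|/eqP //]; by rewrite xw qadj_irr in wx.
Qed.

Lemma par0_in2 n (a b w w' : vtx n) : qadj a b -> w \in [set a; b] -> w' \in [set a; b] ->
  ~~ parity w -> ~~ parity w' -> w = w'.
Proof.
move=> ab; have pb := qadj_par ab; rewrite !inE.
by case/orP => /eqP ->; case/orP => /eqP -> //; rewrite pb; case: (parity a).
Qed.

Lemma ML1 n (G : {set {set vtx n}}) (X : {set vtx n}) a b :
  2 < #|vtx n| -> hamiltonian (adj_minus (G :\ [set a; b])) -> qadj a b -> hypF G X ->
  par0card X <= par1card X.
Proof.
move=> big [s [Us Ss Cs]] ab hyp.
set e := [set a; b].
have injn : injective (next s) by apply: can_inj (prev_next Us).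
have injp : injective (prev s) by apply: can_inj (next_prev Us).
have adjn w : qadj w (next s w) by case/andP: (adj_next Us Ss Cs w).
have adjp w : qadj w (prev s w) by rewrite qadj_sym; case/andP: (adj_prev Us Ss Cs w).
case: (boolP [forall w, (w \in X) && ~~ parity w ==> ([set w; next s w] != e)]) => [/forallP Hn|Nn].
  apply: (img_le injn adjn) => w wX pw; apply/negPn/negP => out.
  case/andP: (adj_next Us Ss Cs w) => _ /negP; apply; rewrite !inE.
  by rewrite (hyp _ _ wX pw out) // andbT; have := Hn w; rewrite wX pw.
case: (boolP [forall w, (w \in X) && ~~ parity w ==> ([set w; prev s w] != e)]) => [/forallP Hp|Np].
  apply: (img_le injp adjp) => w wX pw; apply/negPn/negP => out.
  case/andP: (adj_prev Us Ss Cs w) => _ /negP; apply; rewrite !inE set2C.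
  by rewrite (hyp _ _ wX pw out) // andbT; have := Hp w; rewrite wX pw.
move: Np; rewrite negb_forall => /existsP [w2]; rewrite negb_imply negbK => /andP [/andP [_ p2] /eqP E2].
move: Nn; rewrite negb_forall => /existsP [w1]; rewrite negb_imply negbK => /andP [/andP [_ p1] /eqP E1].
have w12 : w1 = w2.
  apply: (par0_in2 ab) => //; rewrite -/e; [rewrite -E1 | rewrite -E2]; by rewrite !inE eqxx.
subst w2; have np : next s w1 = prev s w1 by apply: set2_inj (adjn w1) _; rewrite E1 E2.
have full := next_full Us Ss (set21 w1 (next s w1)).
have : #|[set: vtx n]| <= #|[set w1; next s w1]|.
  apply: subset_leq_card; apply/subsetP => y _; apply: full => z; rewrite !inE.
  case/orP => /eqP ->; first by rewrite eqxx orbT.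
  by rewrite {1}np (next_prev Us) eqxx.
rewrite cardsT cards2 => le; move: big; rewrite -ltnS in le.
by move=> /leq_trans /(_ le); case: (_ != _).
Qed.

Lemma CORE n (F : {set {set vtx n}}) (X Y : {set vtx n}) :
  3 <= n -> is_edge_set F -> X != set0 -> Y != set0 -> X \proper setT -> Y \proper setT ->
  hypF F X -> hypF F Y -> (forall a b, a \in X -> b \in Y -> ~~ qadj a b) ->
  (forall z, z \in X -> z \notin Y) ->
  par1card X + par1card Y <= par0card X + par0card Y -> par1card X <= par0card X ->
  not_minimal F.
Proof.
move=> n3 edF Xn Yn Xp Yp hX hY nadj disj tot le.
have n0 : 0 < n by apply: leq_trans n3.
have big : 2 < #|vtx n|.
  rewrite card_tuple card_bool; apply: leq_trans (leq_pexp2l _ n3) => //.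
case: (boolP [exists y, exists w, [&& y \in Y, ~~ parity y, w \notin Y & qadj y w]]).
  move=> /existsP [y /existsP [w /and4P [yY py wY yw]]].
  pose F' := [set e in F | [exists u, exists v,
      [&& u \in X, ~~ parity u, v \notin X, qadj u v & e == [set u; v]]]].
  exists F'; split.
    apply/properP; split; first by apply/subsetP => e; rewrite inE => /andP [].
    exists [set y; w]; first exact: hY.
    rewrite inE negb_and; apply/orP; right; rewrite negb_exists; apply/forallP => u.
    rewrite negb_exists; apply/forallP => v; apply/negP => /and5P [uX _ _ _ /eqP E].
    have : u \in [set y; w] by rewrite E !inE eqxx.
    rewrite !inE => /orP [/eqP uy | /eqP uw].
      by move: (disj _ uX); rewrite uy yY.
    by move: (nadj _ _ uX yY); rewrite uw qadj_sym yw.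
  move=> H; have := ML H Xn Xp.
  have hX' : hypF F' X.
    move=> u v uX pu vX uv; rewrite inE hX //=; apply/existsP; exists u; apply/existsP; exists v.
    by rewrite uX pu vX uv eqxx.
  by move=> /(_ hX'); rewrite ltnNge le.
move=> NY.
have clY : forall u v, u \in Y -> ~~ parity u -> qadj u v -> v \in Y.
  move=> u v uY pu uv; apply/negPn/negP => vY; move/negP: NY; apply.
  by apply/existsP; exists u; apply/existsP; exists v; rewrite uY pu vY uv.
have ltY := flip_count n0 Yn Yp clY.
have ltX : par1card X < par0card X.
  by rewrite -(ltn_add2r (par0card Y)); apply: leq_trans tot; rewrite ltn_add2l.
case: (set_0Vmem F) => [F0 | [e eF]].
  have clX : forall u v, u \in X -> ~~ parity u -> qadj u v -> v \in X.
    move=> u v uX pu uv; apply/negPn/negP => vX; have := hX _ _ uX pu vX uv.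
    by rewrite F0 inE.
  by have := flip_count n0 Xn Xp clX; rewrite ltnNge ltnW.
have [a [b [ab Ee]]] := edF e eF.
exists (F :\ e); split; first exact: properD1.
rewrite Ee => H; have := ML1 big H ab hX.
by rewrite leqNgt ltX.
Qed.

Theorem lemma4 (n : nat) (F : {set {set vtx n}}) (T : {set vtx n}) :
  3 <= n ->
  is_edge_set F ->
  T \proper [set: vtx n] ->
  3 <= #|T| ->
  par1card T <= par0card T ->
  (forall u v : vtx n, u \in T -> ~~ parity u -> v \notin T -> qadj u v ->
     [set u; v] \in F) ->
  ~ induced_connected T ->
  not_minimal F.
Proof.
move=> n3 edF Tp _ cnt hT NC.
have [x [y [xT yT nc]]] :
    exists x y, [/\ x \in T, y \in T & ~~ connect (induced_adj T) x y].
  case: (boolP [exists x, exists y, [&& x \in T, y \in T & ~~ connect (induced_adj T) x y]]).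
    by move=> /existsP [x /existsP [y /and3P [h1 h2 h3]]]; exists x, y.
  move=> H; exfalso; apply: NC => x y xT yT; apply/negPn/negP => h; move/negP: H; apply.
  by apply/existsP; exists x; apply/existsP; exists y; rewrite xT yT h.
pose A := [set z in T | connect (induced_adj T) x z].
pose B := T :\: A.
have AT : A \subset T by apply/subsetP => z; rewrite inE => /andP [].
have clA : forall a b, a \in A -> b \in T -> qadj a b -> b \in A.
  move=> a b; rewrite !inE => /andP [aT ca] bT ab; rewrite bT /=.
  by apply: connect_trans ca (connect1 _); rewrite /induced_adj aT bT ab.
have nAB : forall a b, a \in A -> b \in B -> ~~ qadj a b.
  move=> a b aA; rewrite inE => /andP [bA bT]; apply/negP => ab.
  by rewrite (clA a b) in bA.
have nBA : forall a b, a \in B -> b \in A -> ~~ qadj a b.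
  by move=> a b aB bA; rewrite qadj_sym nAB.
have disAB : forall z, z \in A -> z \notin B by move=> z zA; rewrite inE zA.
have disBA : forall z, z \in B -> z \notin A by move=> z; rewrite inE => /andP [].
have BT : B \subset T by apply: subsetDl.
have hA : hypF F A.
  move=> u v uA pu vA uv; apply: hT => //; first by apply: (subsetP AT).
  by apply/negP => vT; rewrite (clA u v) in vA.
have hB : hypF F B.
  move=> u v uB pu vB uv; apply: hT => //; first by apply: (subsetP BT).
  apply/negP => vT; have vA : v \in A by move: vB; rewrite inE vT andbT negbK.
  by move: (nAB v u vA uB); rewrite qadj_sym uv.
have An : A != set0 by apply/set0Pn; exists x; rewrite inE xT connect0.
have Bn : B != set0.
  by apply/set0Pn; exists y; rewrite !inE yT nc.
have Ap : A \proper setT by apply: sub_proper_trans AT Tp.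
have Bp : B \proper setT by apply: sub_proper_trans BT Tp.
have split (p : bool) : #|[set v in T | parity v == p]| =
    #|[set v in A | parity v == p]| + #|[set v in B | parity v == p]|.
  rewrite -(cardsID A [set v in T | parity v == p]); congr (_ + _); apply: eq_card => z;
  by rewrite !inE; case: (z \in T); case: connect; case: (parity z == p).
have e0 (X : {set vtx n}) : par0card X = #|[set v in X | parity v == false]|.
  by rewrite /par0card; apply: eq_card => z; rewrite !inE; case: parity.
have e1 (X : {set vtx n}) : par1card X = #|[set v in X | parity v == true]|.
  by rewrite /par1card; apply: eq_card => z; rewrite !inE; case: parity.
have tot : par1card A + par1card B <= par0card A + par0card B.
  by move: cnt; rewrite !e0 !e1 !split.
case: (leqP (par1card A) (par0card A)) => hle.
  exact: (CORE n3 edF An Bn Ap Bp hA hB nAB disAB tot hle).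
apply: (CORE n3 edF Bn An Bp Ap hB hA nBA disBA); first by rewrite addnC [par0card B + _]addnC.
by rewrite -(leq_add2l (par1card A)); apply: leq_trans tot _; rewrite leq_add2r ltnW.
Qed.
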